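(* Let $\Sigma$ be an alphabet with $|\Sigma|\ge3$ and $k\ge1$. A function $f\colon(\Sigma^* )^k\to\Sigma^*$ is congruence preserving if and only if there exist $n\in\mathbb{N}$, words $w_0,\ldots,w_n\in\Sigma^*$, exponents $p_1,\ldots,p_n\in\mathbb{N}$ and indices $i_1,\ldots,i_n\in\{1,\ldots,k\}$ such that for all $x_1,\ldots,x_k\in\Sigma^*$, $$f(x_1,\ldots,x_k)=w_0\,x_{i_1}^{p_1}\,w_1\,x_{i_2}^{p_2}\,w_2\cdots x_{i_n}^{p_n}\,w_n.$$
   Context: $\Sigma^*$ is the free monoid over $\Sigma$ (finite words, concatenation, empty word $\varepsilon$); $x^p$ denotes the concatenation of $p$ copies of $x$. A congruence on $\Sigma^*$ is an equivalence relation $\sim$ such that $u\sim v$ and $u'\sim v'$ imply $uu'\sim vv'$. A function $f\colon(\Sigma^* )^k\to\Sigma^*$ is congruence preserving if for every congruence $\sim$ on $\Sigma^*$ and all $u_1,\ldots,u_k,v_1,\ldots,v_k\in\Sigma^*$ with $u_i\sim v_i$ for all $i$, we have $f(u_1,\ldots,u_k)\sim f(v_1,\ldots,v_k)$. *)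

(* Defs.v *)
From mathcomp Require Import all_boot.
Set Implicit Arguments. Unset Strict Implicit. Unset Printing Implicit Defensive.

Definition wpow (T : Type) (x : seq T) (p : nat) : seq T := flatten (nseq p x).

Definition is_congruence (T : Type) (R : seq T -> seq T -> Prop) : Prop :=
  [/\ (forall u, R u u),
      (forall u v, R u v -> R v u),
      (forall u v w, R u v -> R v w -> R u w) &
      (forall u v u' v', R u v -> R u' v' -> R (u ++ u') (v ++ v'))].

Definition congruence_preserving (T : Type) (k : nat)
    (f : ('I_k -> seq T) -> seq T) : Prop :=
  forall R : seq T -> seq T -> Prop, is_congruence R ->
  forall u v : 'I_k -> seq T, (forall i, R (u i) (v i)) -> R (f u) (f v).

(* w0 x_{i1}^{p1} w1 ... x_{in}^{pn} wn, with ts = [(i1,p1,w1); ...; (in,pn,wn)] *)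
Definition poly_word (T : Type) (k : nat) (w0 : seq T)
    (ts : seq ('I_k * nat * seq T)) (x : 'I_k -> seq T) : seq T :=
  w0 ++ flatten [seq wpow (x t.1.1) t.1.2 ++ t.2 | t <- ts].

(* Main.v *)
Require Import Defs.
From mathcomp Require Import all_boot.
From mathcomp Require Import zify.
Set Implicit Arguments. Unset Strict Implicit.

Section Comb.
Variable T : eqType.

Definition hom (h : T -> seq T) (s : seq T) : seq T := flatten (map h s).
Definition mg (p q x : T) : T := if x == p then q else x.
Definition sb (r : T) (w : seq T) (x : T) : seq T := if x == r then w else [:: x].

Lemma hom_cat h s1 s2 : hom h (s1 ++ s2) = hom h s1 ++ hom h s2.
Proof. by rewrite /hom map_cat flatten_cat. Qed.

Lemma hom_cons h x s : hom h (x :: s) = h x ++ hom h s.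
Proof. by []. Qed.

Lemma hom_single (g : T -> T) s : hom (fun x => [:: g x]) s = map g s.
Proof. by elim: s => //= x s IH; rewrite -IH. Qed.

Lemma catL (w s t : seq T) : w ++ s = w ++ t -> s = t.
Proof. by elim: w => //= x w IH [] /IH. Qed.

Lemma hom_sb_id r w s : r \notin s -> hom (sb r w) s = s.
Proof.
elim: s => //= x s IH; rewrite in_cons negb_or => /andP [xr /IH].
by rewrite /hom /= => ->; rewrite /sb eq_sym (negbTE xr).
Qed.

Lemma mg_eqE (p q x y : T) : mg p q x = mg p q y ->
  x = y \/ (x = p /\ y = q) \/ (x = q /\ y = p).
Proof.
rewrite /mg; case: (x =P p) => [->|xp]; case: (y =P p) => [->|yp] //; auto;
  by [move=> <-; auto|move=> ->; auto].
Qed.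

Lemma mg_pair (p q p' q' x y : T) :
  ~~ ((p == p') && (q == q')) -> ~~ ((p == q') && (q == p')) ->
  mg p q x = mg p q y -> mg p' q' x = mg p' q' y -> x = y.
Proof.
move=> n1 n2 /mg_eqE [//|[[-> ->]|[-> ->]]] /mg_eqE [//|[[e1 e2]|[e1 e2]]];
  subst; move: n1 n2; rewrite !eqxx //= ?andbT.
Qed.

Lemma mg_val (p q z y : T) : mg p q z = y -> y != q -> z = y.
Proof. by rewrite /mg; case: (z =P p) => // _ -> /eqP. Qed.

Lemma mg_id (p q z : T) : z != p -> mg p q z = z.
Proof. by rewrite /mg => /negbTE ->. Qed.

Lemma mg_idem (p q z : T) : q != p -> mg p q (mg p q z) = mg p q z.
Proof. by move=> qp; rewrite /mg; case: (z =P p) => [_|zp]; [rewrite (negbTE qp)|rewrite (introF eqP zp)]. Qed.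

Lemma map_pair_inj (m1 m2 : T -> T) s1 s2 :
  (forall x y, m1 x = m1 y -> m2 x = m2 y -> x = y) ->
  map m1 s1 = map m1 s2 -> map m2 s1 = map m2 s2 -> s1 = s2.
Proof.
move=> H; elim: s1 s2 => [|x s1 IH] [|y s2] //= [e1 e1'] [e2 e2'].
by rewrite (H _ _ e1 e2) (IH _ e1' e2').
Qed.

Lemma mask_lemma (p q r : T) (w : seq T) s1 s2 : r != p -> r != q ->
  map (mg p q) s1 = map (mg p q) s2 -> hom (sb r w) s1 = hom (sb r w) s2 -> s1 = s2.
Proof.
move=> rp rq; elim: s1 s2 => [|x s1 IH] [|y s2] //= [e1 e1'].
rewrite !hom_cons /sb.
have [xr|xr] := eqVneq x r.
  have yr : y = r.
    move: e1; rewrite xr (mg_id _ rp) => /esym e.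
    exact: (mg_val e rq).
  by subst; rewrite !eqxx => /catL /(IH _ e1') ->.
have yr : y != r.
  apply/eqP=> yr; move: e1; rewrite yr (mg_id _ rp) => e.
  by move: xr; rewrite (mg_val e rq) eqxx.
rewrite ?(negbTE xr) ?(negbTE yr) /= => -[exy /(IH _ e1')] ->.
by rewrite exy.
Qed.

Lemma power_lemma (r t : T) (w : seq T) s1 s2 : r != t -> w != [::] ->
  hom (sb r w) s1 = hom (sb r w) s2 -> hom (sb t w) s1 = hom (sb t w) s2 -> s1 = s2.
Proof.
case: w => [//|s0 w'] rt _.
have sbE z u : sb z (s0 :: w') u = mg z s0 u :: (if u == z then w' else [::]).
  by rewrite /sb /mg; case: (u == z).
elim: s1 s2 => [|x s1 IH] [|y s2] //=; rewrite ?hom_cons ?sbE //.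
have [->|xy] := eqVneq x y.
  by move=> /catL e1 /catL e2; rewrite (IH _ e1 e2).
move=> [e1 _] [e2 _]; case/negP: xy; apply/eqP.
apply: (mg_pair _ _ e1 e2); rewrite ?eqxx ?andbT //.
by apply/negP => /andP [/eqP f1 /eqP f2]; rewrite f1 f2 eqxx in rt.
Qed.

Lemma erase3 (p q r : T) s1 s2 : p != q -> q != r -> p != r ->
  hom (sb p [::]) s1 = hom (sb p [::]) s2 ->
  hom (sb q [::]) s1 = hom (sb q [::]) s2 ->
  hom (sb r [::]) s1 = hom (sb r [::]) s2 -> s1 = s2.
Proof.
move=> pq qr pr.
have pick3 (x : T) : exists2 l, l \in [:: p; q; r] & l != x.
  have [xp|xp] := eqVneq x p; last by exists p; rewrite ?inE ?eqxx // eq_sym.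
  by exists q; rewrite ?inE ?eqxx ?orbT // xp eq_sym.
have pick3' (x y : T) : x != y -> exists2 l, l \in [:: p; q; r] & (l != x) && (l != y).
  move=> xy.
  have [lp|] := boolP ((p != x) && (p != y)); first by exists p; rewrite ?inE ?eqxx.
  have [lq|] := boolP ((q != x) && (q != y)); first by exists q; rewrite ?inE ?eqxx ?orbT.
  have [lr|] := boolP ((r != x) && (r != y)); first by exists r; rewrite ?inE ?eqxx ?orbT.
  move: xy pq qr pr; rewrite !negb_and !negbK.
  move=> /eqP ? /eqP ? /eqP ? /eqP ? /orP [] /eqP ? /orP [] /eqP ? /orP [] /eqP ?;
    exfalso; congruence.
have gen l s s' : l \in [:: p; q; r] ->
  hom (sb p [::]) s = hom (sb p [::]) s' ->
  hom (sb q [::]) s = hom (sb q [::]) s' ->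
  hom (sb r [::]) s = hom (sb r [::]) s' -> hom (sb l [::]) s = hom (sb l [::]) s'.
  by rewrite !inE => /or3P [] /eqP ->.
elim: s1 s2 => [|x s1 IH] [|y s2] //.
- move=> e1 e2 e3; have [l Hl ly] := pick3 y.
  by move: (gen _ _ _ Hl e1 e2 e3); rewrite hom_cons /sb eq_sym (negbTE ly).
- move=> e1 e2 e3; have [l Hl ly] := pick3 x.
  by move: (gen _ _ _ Hl e1 e2 e3); rewrite hom_cons /sb eq_sym (negbTE ly).
have [->|xy] := eqVneq x y.
  by rewrite !hom_cons => /catL e1 /catL e2 /catL e3; rewrite (IH _ e1 e2 e3).
move=> e1 e2 e3; have [l Hl /andP [lx ly]] := pick3' _ _ xy.
move: (gen _ _ _ Hl e1 e2 e3).
rewrite !hom_cons /sb ![_ == l]eq_sym (negbTE lx) (negbTE ly) => -[/eqP].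
by rewrite (negbTE xy).
Qed.

End Comb.

Section Main.
Variable Sigma : finType.
Variable k : nat.
Variable f : ('I_k -> seq Sigma) -> seq Sigma.
Hypothesis CPf : congruence_preserving f.
Variables a b c : Sigma.
Hypotheses (ab : a != b) (ac : a != c) (bc : b != c).

Definition inst (T : seq (Sigma + 'I_k)) (x : 'I_k -> seq Sigma) :=
  flatten (map (fun o => match o with inl s => [:: s] | inr i => x i end) T).

Lemma hom_congr h : is_congruence (fun u v : seq Sigma => hom h u = hom h v).
Proof.
split => [u|u v|u v w|u v u' v'] /=; [done|move=> e; exact: esym e|
  move=> e1 e2; exact: etrans e1 e2|move=> e1 e2; by rewrite !hom_cat e1 e2].
Qed.

Lemma eq_congr : is_congruence (@eq (seq Sigma)).
Proof. by split => [u|u v|u v w|u v u' v'] //= -> // ->. Qed.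

Lemma fext x y : (forall i, x i = y i) -> f x = f y.
Proof. exact: CPf eq_congr x y. Qed.

Lemma inst_ext T x y : (forall i, x i = y i) -> inst T x = inst T y.
Proof. by move=> H; rewrite /inst; congr flatten; apply: eq_map => -[s|i] //=. Qed.

Lemma hom_inst h T x y : (forall i, hom h (x i) = hom h (y i)) ->
  hom h (inst T x) = hom h (inst T y).
Proof.
move=> H; rewrite /inst; elim: T => [|o T IH] //=.
by rewrite !hom_cat IH; case: o => [s|i] //=; rewrite H.
Qed.

Lemma mgCP p q u v : (forall i, map (mg p q) (u i) = map (mg p q) (v i)) ->
  map (mg p q) (f u) = map (mg p q) (f v).
Proof.
move=> H; rewrite -!hom_single; apply: (CPf (hom_congr _)) => i.
by rewrite !hom_single.
Qed.

Lemma mapmg_nth p q U V : map (mg p q) U = map (mg p q) V ->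
  size U = size V /\ forall j, mg p q (nth a U j) = mg p q (nth a V j).
Proof.
move=> E; have sUV : size U = size V by rewrite -(size_map (mg p q)) E size_map.
split => // j; case: (ltnP j (size U)) => Hj.
  rewrite -!(nth_map a (mg p q a)) -?sUV //.
  by rewrite E.
by rewrite !nth_default // -sUV.
Qed.

Definition abar : 'I_k -> seq Sigma := fun _ => [:: a].
Definition xp (i : 'I_k) (p : Sigma) : 'I_k -> seq Sigma :=
  fun j => if j == i then [:: p] else [:: a].
Definition F0 := f abar.
Definition W i p j := nth a (f (xp i p)) j.
Definition hole j : option 'I_k := [pick i | W i b j != nth a F0 j].
Definition T : seq (Sigma + 'I_k) :=
  mkseq (fun j => if hole j is Some i then inr i else inl (nth a F0 j)) (size F0).

Lemma H1 i p : map (mg p a) (f (xp i p)) = map (mg p a) F0.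
Proof.
apply: mgCP => l; rewrite /xp /abar /mg; case: (l == i) => //=.
by rewrite eqxx if_same.
Qed.

Lemma H2 i p q : map (mg p q) (f (xp i p)) = map (mg p q) (f (xp i q)).
Proof.
apply: mgCP => l; rewrite /xp /mg; case: (l == i) => //=.
by rewrite eqxx if_same.
Qed.

Lemma H1n i p j : mg p a (W i p j) = mg p a (nth a F0 j).
Proof. by have [_ ->] := mapmg_nth (H1 i p). Qed.

Lemma H2n i p q j : mg p q (W i p j) = mg p q (W i q j).
Proof. by have [_ ->] := mapmg_nth (H2 i p q). Qed.

Lemma size_xp i p : size (f (xp i p)) = size F0.
Proof. by have [-> _] := mapmg_nth (H1 i p). Qed.

Lemma Wa i j : W i a j = nth a F0 j.
Proof. by rewrite /W /F0 (@fext (xp i a) abar) // => l; rewrite /xp /abar; case: ifP. Qed.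

Lemma ba : b != a. Proof. by rewrite eq_sym. Qed.
Lemma ca : c != a. Proof. by rewrite eq_sym. Qed.
Lemma cb : c != b. Proof. by rewrite eq_sym. Qed.

Lemma B1 i j : W i b j != nth a F0 j -> nth a F0 j = a /\ forall p, W i p j = p.
Proof.
move=> Hn.
have [u_a Wb] : nth a F0 j = a /\ W i b j = b.
  case/mg_eqE: (H1n i b j) => [e|[[e1 e2]|[e1 e2]]]; first by rewrite e eqxx in Hn.
    by [].
  have h3 := H1n i c j; rewrite e2 (mg_id _ bc) in h3.
  have Wc := mg_val h3 ba.
  have h4 := H2n i c b j; rewrite Wc e1 (mg_id _ bc) (mg_id _ ac) in h4.
  by move: ab; rewrite h4 eqxx.
split => // p.
have [->|pa] := eqVneq p a; first by rewrite Wa.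
have [->|pb] := eqVneq p b; first by [].
apply: (@mg_pair _ p a p b); rewrite ?eqxx ?(negbTE ab) ?(negbTE pb) //.
  by rewrite H1n u_a /mg eqxx (negbTE (_ : a != p)) // eq_sym.
by rewrite H2n Wb /mg eqxx if_same.
Qed.

Lemma B2 i j : W i b j = nth a F0 j -> forall p, W i p j = nth a F0 j.
Proof.
move=> Hb p.
have [->|pa] := eqVneq p a; first by rewrite Wa.
have [->|pb] := eqVneq p b; first by [].
apply: (@mg_pair _ p a p b); rewrite ?eqxx ?(negbTE ab) ?(negbTE pb) //.
  exact: H1n.
by rewrite H2n Hb.
Qed.

Lemma B3 i i' j : i != i' -> W i b j != nth a F0 j -> W i' b j != nth a F0 j -> False.
Proof.
move=> ii Hi Hi'.
have [_ Wi] := B1 Hi; have [_ Wi'] := B1 Hi'.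
pose v := fun l => if l == i then [:: b] else if l == i' then [:: c] else [:: a].
have simp := (negbTE ab, negbTE ac, negbTE bc, negbTE ba, negbTE ca, negbTE cb).
have e1 : map (mg c a) (f v) = map (mg c a) (f (xp i b)).
  apply: mgCP => l; rewrite /v /xp; have [e|li] := eqVneq l i => //=.
  by case: (l == i') => //=; rewrite /mg ?eqxx ?simp.
have e2 : map (mg b a) (f v) = map (mg b a) (f (xp i' c)).
  apply: mgCP => l; rewrite /v /xp; have [e|li] := eqVneq l i.
    by rewrite e (negbTE ii) /= /mg ?eqxx ?simp.
  by case: (l == i') => //=; rewrite /mg ?eqxx ?simp.
have [_ n1] := mapmg_nth e1; have [_ n2] := mapmg_nth e2.
have v1 := n1 j; change (mg c a (nth a (f v) j) = mg c a (W i b j)) in v1.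
rewrite Wi (mg_id _ bc) in v1.
have v2 := n2 j; change (mg b a (nth a (f v) j) = mg b a (W i' c j)) in v2.
rewrite Wi' (mg_id _ cb) in v2.
by move: bc; rewrite -(mg_val v1 ba) (mg_val v2 ca) eqxx.
Qed.

Definition tval (g : 'I_k -> Sigma) (o : Sigma + 'I_k) : Sigma :=
  match o with inl s => s | inr i => g i end.

Lemma inst_single T0 x g : (forall l, x l = [:: g l]) -> inst T0 x = map (tval g) T0.
Proof. by move=> H; rewrite /inst; elim: T0 => [|[s|i] T0 IH] //=; rewrite IH ?H. Qed.

Lemma size_T : size T = size F0.
Proof. by rewrite size_mkseq. Qed.

Lemma nth_T j : j < size F0 -> nth (inl a) T j =
  if hole j is Some i then inr i else inl (nth a F0 j).
Proof. by move=> Hj; rewrite nth_mkseq. Qed.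

Lemma C_xp i p : f (xp i p) = inst T (xp i p).
Proof.
rewrite (@inst_single _ _ (fun l => if l == i then p else a)); last first.
  by move=> l; rewrite /xp; case: ifP.
apply: (@eq_from_nth _ a); first by rewrite size_map size_T size_xp.
move=> j; rewrite size_xp => Hj.
rewrite (nth_map (inl a)) ?size_T // nth_T // /hole.
case: pickP => [i' Hi'|Hn] /=.
  have [ei|ii] := eqVneq i' i.
    by subst i'; exact: (B1 Hi').2 p.
  have Wib : W i b j = nth a F0 j.
    by apply/eqP; apply: contraT => Hi; case: (B3 ii Hi' Hi).
  have -> : nth a (f (xp i p)) j = nth a F0 j by exact: (B2 Wib p).
  by have [-> _] := B1 Hi'.
have Wib : W i b j = nth a F0 j by apply/eqP; move: (Hn i) => /= /negbFE.
exact: (B2 Wib p).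
Qed.

Lemma C_abar : f abar = inst T abar.
Proof.
rewrite (@inst_single _ _ (fun _ => a)) //.
apply: (@eq_from_nth _ a); first by rewrite size_map size_T.
move=> j Hj; rewrite (nth_map (inl a)) ?size_T // nth_T // /hole.
case: pickP => [i' Hi'|Hn] //=.
by have [-> _] := B1 Hi'.
Qed.

Definition upd (x : 'I_k -> seq Sigma) i w : 'I_k -> seq Sigma :=
  fun j => if j == i then w else x j.
Definition mgt p q (x : 'I_k -> seq Sigma) : 'I_k -> seq Sigma :=
  fun j => map (mg p q) (x j).
Definition sz (x : 'I_k -> seq Sigma) := \sum_(i < k) size (x i).
Definition nn (x : 'I_k -> seq Sigma) := \sum_(i < k) count (fun s => s != a) (x i).
Definition occ p (x : 'I_k -> seq Sigma) := [exists i, p \in x i].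

Lemma sum_upd (F : seq Sigma -> nat) x i w :
  \sum_(l < k) F (upd x i w l) + F (x i) = \sum_(l < k) F (x l) + F w.
Proof.
rewrite (bigD1 i) //= [X in _ = X + _](bigD1 i) //= /upd eqxx.
under eq_bigr => l hl do rewrite (negbTE hl).
lia.
Qed.

Lemma sz_upd x i w : sz (upd x i w) + size (x i) = sz x + size w.
Proof. exact: sum_upd. Qed.

Lemma nn_upd x i w : nn (upd x i w) + count (fun s => s != a) (x i) =
  nn x + count (fun s => s != a) w.
Proof. exact: sum_upd. Qed.

Lemma sz_mgt p q x : sz (mgt p q x) = sz x.
Proof. by apply: eq_bigr => i _; rewrite size_map. Qed.

Lemma cnt_mg p s : p != a ->
  count (fun y => y != a) (map (mg p a) s) + count (pred1 p) s = count (fun y => y != a) s.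
Proof.
move=> pa; elim: s => [|y s IH] //=.
have [->|yp] := eqVneq y p.
  have -> : mg p a p = a by rewrite /mg eqxx.
  by rewrite eqxx pa /= -IH add0n addnCA.
by rewrite (mg_id _ yp) /= -IH add0n addnA.
Qed.

Lemma nn_mgt p x : p != a -> nn (mgt p a x) + \sum_(l < k) count (pred1 p) (x l) = nn x.
Proof. by move=> pa; rewrite /nn /mgt -big_split /=; apply: eq_bigr => l _; exact: cnt_mg. Qed.

Lemma count_pos (p : Sigma) (s : seq Sigma) : p \in s -> 0 < count (pred1 p) s.
Proof. by rewrite -has_count has_pred1. Qed.

Lemma sum_pos (p : Sigma) (x : 'I_k -> seq Sigma) i : p \in x i -> 0 < \sum_(l < k) count (pred1 p) (x l).
Proof.
move=> /count_pos H; rewrite (bigD1 i) //=; exact: ltn_addr _ H.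
Qed.

Lemma sum_two (p : Sigma) (x : 'I_k -> seq Sigma) i j : j != i -> p \in x i -> p \in x j ->
  1 < \sum_(l < k) count (pred1 p) (x l).
Proof.
move=> ji /count_pos Hi /count_pos Hj; rewrite (bigD1 i) //= (bigD1 j) //=.
exact: (leq_add Hi (ltn_addr _ Hj)).
Qed.

Lemma toolG h u x : f u = inst T u -> (forall i, hom h (u i) = hom h (x i)) ->
  hom h (f x) = hom h (inst T x).
Proof.
move=> Cu H; rewrite -(hom_inst T H) -Cu; apply: esym; exact: (CPf (hom_congr h) H).
Qed.

Lemma Cmg p q x : q != p -> f (mgt p q x) = inst T (mgt p q x) ->
  map (mg p q) (f x) = map (mg p q) (inst T x).
Proof.
move=> qp C; rewrite -!hom_single; apply: (toolG C) => i.
by rewrite !hom_single /mgt -map_comp; apply: eq_map => s /=; exact: mg_idem.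
Qed.

Lemma map_mg_id (p q : Sigma) (s : seq Sigma) : p \notin s -> map (mg p q) s = s.
Proof.
elim: s => //= y s IH; rewrite in_cons negb_or => /andP [py /IH ->].
by rewrite /mg eq_sym (negbTE py).
Qed.

Lemma single_mem (s : seq Sigma) (p : Sigma) : size s = 1 -> p \in s -> s = [:: p].
Proof. by case: s => [|y [|]] //= _; rewrite inE => /eqP ->. Qed.

Lemma Cne_main : forall n m (x : 'I_k -> seq Sigma), sz x = n -> nn x = m ->
  (forall i, x i != [::]) -> f x = inst T x.
Proof.
elim/ltn_ind => n IHn m; elim/ltn_ind: m => m IHm x Hs Hm Hne.
have IH y : (forall i, y i != [::]) -> (sz y < n) || ((sz y == n) && (nn y < m)) ->
    f y = inst T y.
  move=> ney /orP [lt|/andP [/eqP e lt]].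
    exact: (IHn _ lt _ _ erefl erefl ney).
  exact: (IHm _ lt _ e erefl ney).
have neupd i w : w != [::] -> forall l, upd x i w l != [::].
  by move=> nw l; rewrite /upd; case: ifP.
have IHmg p : p != a -> occ p x -> f (mgt p a x) = inst T (mgt p a x).
  move=> pa /existsP [i pi]; apply: IH.
    by move=> l; rewrite /mgt; move: (Hne l); case: (x l).
  apply/orP; right; rewrite sz_mgt Hs eqxx /= -Hm -(nn_mgt x pa).
  by rewrite -[X in X < _]addn0 ltn_add2l; exact: sum_pos pi.
have case1 p q : p != a -> q != a -> p != q -> occ p x -> occ q x -> f x = inst T x.
  move=> pa qa pq op oq.
  apply: (@map_pair_inj _ (mg p a) (mg q a)).
  - move=> u v; apply: mg_pair; rewrite ?eqxx ?andbT ?(negbTE pa) ?(negbTE pq) //.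
  - by apply: Cmg; [rewrite eq_sym | exact: IHmg].
  - by apply: Cmg; [rewrite eq_sym | exact: IHmg].
have chooser (p : Sigma) : exists r, [/\ r != a, r != p & r \in [:: b; c]].
  case: (p =P b) => [->|/eqP pb].
    by exists c; rewrite ca cb !inE eqxx orbT.
  by exists b; rewrite ba eq_sym pb !inE eqxx.
case: (boolP [exists p, (p != a) && occ p x]) => [/existsP [p /andP [pa op]]|nop].
  case: (boolP [exists q, [&& q != a, q != p & occ q x]]) =>
    [/existsP [q /and3P [qa qp oq]]|noq].
    by apply: (case1 p q pa qa _ op oq); rewrite eq_sym.
  have allp q : q != a -> occ q x -> q = p.
    move=> qa oq; apply/eqP; apply: contraNT noq => qp.
    by apply/existsP; exists q; rewrite qa qp oq.
  have notin r : r != a -> r != p -> forall l, r \notin x l.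
    move=> ra rp l; apply: contra rp => rl; apply/eqP; apply: allp ra _.
    by apply/existsP; exists l.
  have [r [ra rp _]] := chooser p.
  case: (boolP [exists i, 1 < size (x i)]) => [/existsP [i si]|nosz].
    have Cu : f (upd x i [:: r]) = inst T (upd x i [:: r]).
      apply: IH; first exact: neupd.
      apply/orP; left; have := sz_upd x i [:: r]; rewrite Hs => e.
      by rewrite -(ltn_add2r (size (x i))) e ltn_add2l.
    apply: (@mask_lemma _ p a r (x i) (f x) (inst T x) rp ra).
      by apply: Cmg; [rewrite eq_sym | exact: IHmg].
    apply: (toolG Cu) => l; rewrite /upd; case: (l =P i) => [->|_] //.
    by rewrite [RHS]hom_sb_id ?notin // /hom /= /sb eqxx cats0.
  have s1 l : size (x l) = 1.
    move/existsPn: nosz => /(_ l); move: (Hne l); case: (x l) => [|y [|z t]] //.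
  case/existsP: (op) => i pi.
  have xi : x i = [:: p] by exact: single_mem.
  case: (boolP [exists j, (j != i) && (x j != [:: a])]) =>
    [/existsP [j /andP [ji xj]]|noj]; last first.
    have ext l : x l = xp i p l.
      rewrite /xp; case: (l =P i) => [->//|/eqP li].
      apply/eqP; apply: contraNT noj => xl; apply/existsP; exists l; by rewrite li.
    by rewrite (fext ext) (inst_ext T ext) C_xp.
  have pj : p \in x j.
    move: (s1 j) xj; case E: (x j) => [|y [|]] //= _ ya.
    have ya' : y != a by apply: contra ya => /eqP ->.
    rewrite (allp y ya') ?inE //.
    by apply/existsP; exists j; rewrite E inE.
  pose z := upd x i [:: r].
  have Cxa : f (upd x i [:: a]) = inst T (upd x i [:: a]).
    apply: IH; first exact: neupd.
    apply/orP; right; apply/andP; split.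
      apply/eqP; apply/(@addIn 1); have := sz_upd x i [:: a]; rewrite Hs s1.
      by move=> ->.
    have := nn_upd x i [:: a]; rewrite Hm xi.
    have -> : count (fun s => s != a) [:: p] = 1 by rewrite /= pa.
    have -> : count (fun s => s != a) [:: a] = 0 by rewrite /= eqxx.
    by rewrite addn0 addn1 => <-.
  have Cz : f z = inst T z.
    apply: (@map_pair_inj _ (mg r a) (mg p a)).
    - move=> u v; apply: mg_pair; rewrite ?eqxx ?andbT ?(negbTE rp) //.
      by rewrite (negbTE ra).
    - apply: Cmg; first by rewrite eq_sym.
      have ext l : mgt r a z l = upd x i [:: a] l.
        rewrite /mgt /z /upd; case: (l =P i) => [_|_].
          by rewrite /= /mg eqxx.
        exact: map_mg_id (notin _ ra rp l).
      by rewrite (fext ext) (inst_ext T ext).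
    - apply: Cmg; first by rewrite eq_sym.
      apply: IH.
        by move=> l; rewrite /mgt /z; move: (neupd i [:: r] erefl l); case: (upd x i [:: r] l).
      apply/orP; right; apply/andP; split.
        rewrite sz_mgt; apply/eqP; apply/(@addIn 1).
        have := sz_upd x i [:: r]; rewrite Hs s1.
        by rewrite /z => ->.
      have e2 : nn z = m.
        apply/(@addIn 1); have := nn_upd x i [:: r]; rewrite xi Hm.
        have -> : count (fun s => s != a) [:: p] = 1 by rewrite /= pa.
        by have -> : count (fun s => s != a) [:: r] = 1 by rewrite /= ra.
      have e3 : 0 < \sum_(l < k) count (pred1 p) (z l).
        apply: (@sum_pos p z j); by rewrite /z /upd (negbTE ji).
      rewrite -e2 -(nn_mgt z pa).
      by rewrite -[X in X < _]addn0 ltn_add2l.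
  apply: (@map_pair_inj _ (mg r p) (mg p a)).
  - move=> u v; apply: mg_pair;
      by rewrite ?eqxx ?andbT ?andbF ?(negbTE rp) ?(negbTE ra) ?(negbTE pa).
  - rewrite -!hom_single; apply: (toolG Cz) => l; rewrite !hom_single /z /upd.
    case: (l =P i) => [->|_] //; rewrite xi /= /mg eqxx.
    by rewrite (negbTE (_ : p != r)) // eq_sym.
  - by apply: Cmg; [rewrite eq_sym | exact: IHmg].
have allA l y : y \in x l -> y = a.
  move=> yl; apply/eqP; apply: contraNT nop => ya; apply/existsP; exists y.
  by rewrite ya; apply/existsP; exists l.
have notin r : r != a -> forall l, r \notin x l.
  by move=> ra l; apply: contra ra => /allA ->.
case: (boolP [exists i, 1 < size (x i)]) => [/existsP [i si]|nosz].
  have Cu r : r != a -> f (upd x i [:: r]) = inst T (upd x i [:: r]).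
    move=> ra; apply: IH; first exact: neupd.
    apply/orP; left; have := sz_upd x i [:: r]; rewrite Hs => e.
    by rewrite -(ltn_add2r (size (x i))) e ltn_add2l.
  have E r : r != a -> hom (sb r (x i)) (f x) = hom (sb r (x i)) (inst T x).
    move=> ra; apply: (toolG (Cu r ra)) => l; rewrite /upd; case: (l =P i) => [->|_] //.
    by rewrite [RHS]hom_sb_id ?notin // /hom /= /sb eqxx cats0.
  exact: (@power_lemma _ b c (x i) (f x) (inst T x) bc (Hne i) (E b ba) (E c ca)).
have ext l : x l = abar l.
  move/existsPn: nosz => /(_ l); move: (Hne l) (allA l).
  case: (x l) => [|y [|z t]] //= _ H _; rewrite /abar (H y) ?inE //.
by rewrite (fext ext) (inst_ext T ext) C_abar.
Qed.

Lemma Call x : f x = inst T x.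
Proof.
pose u (l : Sigma) := fun i => if x i == [::] then [:: l] else x i.
have Cu l : f (u l) = inst T (u l).
  apply: (@Cne_main (sz (u l)) (nn (u l)) (u l) erefl erefl) => i.
  by rewrite /u; case: ifP => // /negbT.
have E l : hom (sb l [::]) (f x) = hom (sb l [::]) (inst T x).
  apply: (toolG (Cu l)) => i; rewrite /u; case: (x i =P [::]) => [->|_] //.
  by rewrite /hom /= /sb eqxx.
exact: (@erase3 _ a b c (f x) (inst T x) ab bc ac (E a) (E b) (E c)).
Qed.

End Main.

Unset Implicit Arguments.

Lemma three_letters (Sigma : finType) : 3 <= #|Sigma| ->
  exists a b c : Sigma, [/\ a != b, a != c & b != c].
Proof.
rewrite cardE; move: (enum_uniq Sigma); case: (enum Sigma) => [|a [|b [|c s]]] //=.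
rewrite !inE !negb_or => /and4P [/and3P [H1 H2 _] /andP [H3 _] _ _] _.
by exists a, b, c.
Qed.

Theorem mainTheorem19 (Sigma : finType) (k : nat)
    (hSigma : 3 <= #|Sigma|) (hk : 1 <= k)
    (f : ('I_k -> seq Sigma) -> seq Sigma) :
  congruence_preserving f <->
  exists (w0 : seq Sigma) (ts : seq ('I_k * nat * seq Sigma)),
    forall x : 'I_k -> seq Sigma, f x = poly_word w0 ts x.
Proof.
split.
- move=> CPf.
  have [a [b [c [ab ac bc]]]] := three_letters Sigma hSigma.
  pose i0 : 'I_k := Ordinal hk.
  pose tr (o : Sigma + 'I_k) : 'I_k * nat * seq Sigma :=
    match o with inl s => (i0, 0, [:: s]) | inr i => (i, 1, [::]) end.
  exists [::], (map tr (T f a b)) => x.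
  rewrite (@Call Sigma k f CPf a b c ab ac bc x) /poly_word /inst cat0s -map_comp.
  congr flatten; apply: eq_map => -[s|i] //=.
  by rewrite /wpow /= !cats0.
- move=> [w0 [ts H]] R HR u v Huv; rewrite !H.
  move: HR; rewrite /is_congruence => -[Rr Rs Rt Rc].
  have Hw i p : R (wpow (u i) p) (wpow (v i) p).
    elim: p => [|p IH]; first exact: Rr.
    exact: (Rc _ _ _ _ (Huv i) IH).
  apply: (Rc); first exact: Rr.
  elim: ts {H} => [|t ts IH] /=; first exact: Rr.
  apply: (Rc) => //; apply: (Rc); [exact: Hw | exact: Rr].
Qed.
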